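(* Assume (SM), (LIP), (POT) and consider the algorithm AILFEM of the context with arbitrary $\lambda_{\mathrm{lin}},\lambda_{\mathrm{alg}}>0$. Define $\tau:=M+3M(L[3M]/\alpha)^{1/2}\ (\ge4M)$. Let $k\in\mathbb{N}_0$ with $0\le k<\underline{k}[\ell]$ and $|||u_\ell^{k,\underline{i}}|||\le\tau$, and let $i_{\min}\in\mathbb{N}$ satisfy $q_{\mathrm{alg}}^{i_{\min}}\le1/3$. Then, for $0<\delta<\min\{1/L[5\tau],\,2\alpha/L[2\tau]^2\}$, it holds that $$0\le\mathcal{E}(u_\ell^{k+1,\underline{i}})-\mathcal{E}(u_\ell^\star)\le q_{\mathcal{E}}[\delta,\tau]^2\,[\mathcal{E}(u_\ell^{k,\underline{i}})-\mathcal{E}(u_\ell^\star)]$$ with the contraction constant $$0\le q_{\mathcal{E}}[\delta,\tau]^2:=1-\Big(\frac1\delta-L[5\tau]\Big)\frac{(1-q_{\mathrm{alg}}^{i_{\min}})^2\delta^2\alpha^2}{L[2\tau]}<1,$$ and $q_{\mathcal{E}}[\delta,\tau]\to1$ as $\delta\to0$. In particular, $$(1-q_{\mathcal{E}}[\delta,\tau]^2)[\mathcal{E}(u_\ell^{k,\underline{i}})-\mathcal{E}(u_\ell^\star)]\le\mathcal{E}(u_\ell^{k,\underline{i}})-\mathcal{E}(u_\ell^{k+1,\underline{i}})\le\mathcal{E}(u_\ell^{k,\underline{i}})-\mathcal{E}(u_\ell^\star).$$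
   Context: Abstract setting. Let $\mathcal{X}$ be a real Hilbert space with scalar product $\langle\!\langle\cdot,\cdot\rangle\!\rangle$ and norm $|||\cdot|||$, with dual space $\mathcal{X}'$ (norm $\|\cdot\|_{\mathcal{X}'}$, duality bracket $\langle\cdot,\cdot\rangle$). Let $\mathcal{A}:\mathcal{X}\to\mathcal{X}'$ be a nonlinear operator and $F\in\mathcal{X}'$ with $\mathcal{A}0\neq F$. Conditions: (SM) there is $\alpha>0$ with $\alpha|||v-w|||^2\le\langle\mathcal{A}v-\mathcal{A}w,v-w\rangle$ for all $v,w\in\mathcal{X}$; (LIP) for every $\vartheta>0$ there is $L[\vartheta]>0$ with $\langle\mathcal{A}v-\mathcal{A}w,\varphi\rangle\le L[\vartheta]\,|||v-w|||\,|||\varphi|||$ for all $v,w,\varphi\in\mathcal{X}$ with $\max\{|||v|||,|||v-w|||\}\le\vartheta$; (POT) there is a Gâteaux differentiable $\mathcal{P}:\mathcal{X}\to\mathbb{R}$ with $\langle\mathcal{A}w,v\rangle=\lim_{t\to0}(\mathcal{P}(w+tv)-\mathcal{P}(w))/t$ for all $v,w$. The energy is $\mathcal{E}(v):=\mathcal{P}(v)-F(v)$. For every closed subspace $\mathcal{Y}\subseteq\mathcal{X}$ there is a unique $u^\star_{\mathcal{Y}}\in\mathcal{Y}$ with $\langle\mathcal{A}u^\star_{\mathcal{Y}},v\rangle=F(v)$ for all $v\in\mathcal{Y}$; $u^\star:=u^\star_{\mathcal{X}}$. Put $M:=\|F-\mathcal{A}0\|_{\mathcal{X}'}/\alpha$.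 Meshes. $\mathcal{T}_0$ is an initial conforming simplicial triangulation; $\mathtt{refine}(\mathcal{T}_H,\mathcal{M}_H)$ is the coarsest newest-vertex-bisection (NVB) refinement of $\mathcal{T}_H$ in which all elements of $\mathcal{M}_H\subseteq\mathcal{T}_H$ are refined; $\mathbb{T}(\mathcal{T}_H)$ is the set of meshes obtained from $\mathcal{T}_H$ by finitely many NVB steps, $\mathbb{T}:=\mathbb{T}(\mathcal{T}_0)$. Each $\mathcal{T}_H\in\mathbb{T}$ is associated with a finite-dimensional subspace $\mathcal{X}_H\subset\mathcal{X}$, nested: $\mathcal{X}_H\subseteq\mathcal{X}_h$ if $\mathcal{T}_h\in\mathbb{T}(\mathcal{T}_H)$. Write $u_H^\star:=u^\star_{\mathcal{X}_H}$. Zarantonello map: for $\delta>0$, $w_H\in\mathcal{X}_H$, $\Phi_H(\delta;w_H)\in\mathcal{X}_H$ is the unique solution of $\langle\!\langle\Phi_H(\delta;w_H),v_H\rangle\!\rangle=\langle\!\langle w_H,v_H\rangle\!\rangle+\delta[F(v_H)-\langle\mathcal{A}w_H,v_H\rangle]$ for all $v_H\in\mathcal{X}_H$. Algebraic solver: there is $0<q_{\mathrm{alg}}<1$ and for each $\mathcal{T}_H$ a map $\Psi_H:\mathcal{X}'\times\mathcal{X}_H\to\mathcal{X}_H$ such that for every $\varphi\in\mathcal{X}'$, with $w_H^\star\in\mathcal{X}_H$ solving $\langle\!\langle w_H^\star,v_H\rangle\!\rangle=\varphi(v_H)$ for all $v_H\in\mathcal{X}_H$, one has $|||w_H^\star-\Psi_H(\varphi;w_H)|||\le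 q_{\mathrm{alg}}|||w_H^\star-w_H|||$ for all $w_H\in\mathcal{X}_H$. One writes $\Psi_H(w_H^\star;\cdot)$ for $\Psi_H(\varphi;\cdot)$. Estimator: for $\mathcal{T}_H\in\mathbb{T}$, $T\in\mathcal{T}_H$, $v_H\in\mathcal{X}_H$ a number $\eta_H(T,v_H)\ge0$ is given; $\eta_H(\mathcal{U},v_H):=(\sum_{T\in\mathcal{U}}\eta_H(T,v_H)^2)^{1/2}$ for $\mathcal{U}\subseteq\mathcal{T}_H$ and $\eta_H(v_H):=\eta_H(\mathcal{T}_H,v_H)$. Index $\ell$ refers to $\mathcal{T}_\ell$, $\mathcal{X}_\ell$, $\Phi_\ell$, $\Psi_\ell$, $\eta_\ell$, $u_\ell^\star$. Algorithm AILFEM. Input: $\mathcal{T}_0$, $0<\theta\le1$, $C_{\mathrm{mark}}\ge1$, $\lambda_{\mathrm{lin}},\lambda_{\mathrm{alg}}>0$, $i_{\min}\in\mathbb{N}$, $\delta>0$, $u_0^{0,0}\in\mathcal{X}_0$ with $|||u_0^{0,0}|||\le2M$; set $u_0^{0,\star}:=u_0^{0,\underline{i}}:=u_0^{0,0}$. For $\ell=0,1,2,\dots$: (I) For $k=1,2,\dots$: set $u_\ell^{k,0}:=u_\ell^{k-1,\underline{i}}$ and $u_\ell^{k,\star}:=\Phi_\ell(\delta;u_\ell^{k-1,\underline{i}})$ (not computed). For $i=1,2,\dots$: compute $u_\ell^{k,i}:=\Psi_\ell(u_\ell^{k,\star};u_\ell^{k,i-1})$ and $\eta_\ell(u_\ell^{k,i})$;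 terminate the $i$-loop with $\underline{i}[\ell,k]:=i$ if $|||u_\ell^{k,i-1}-u_\ell^{k,i}|||\le\lambda_{\mathrm{alg}}[\lambda_{\mathrm{lin}}\eta_\ell(u_\ell^{k,i})+|||u_\ell^{k,i}-u_\ell^{k,0}|||]$ and $i_{\min}\le i$. Write $u_\ell^{k,\underline{i}}:=u_\ell^{k,\underline{i}[\ell,k]}$. Terminate the $k$-loop with $\underline{k}[\ell]:=k$ if $\mathcal{E}(u_\ell^{k,0})-\mathcal{E}(u_\ell^{k,\underline{i}})\le\lambda_{\mathrm{lin}}^2\eta_\ell(u_\ell^{k,\underline{i}})^2$ and $|||u_\ell^{k,\underline{i}}|||\le2M$. (II) Choose $\mathcal{M}_\ell\subseteq\mathcal{T}_\ell$ with $\theta\,\eta_\ell(u_\ell^{\underline{k},\underline{i}})^2\le\eta_\ell(\mathcal{M}_\ell,u_\ell^{\underline{k},\underline{i}})^2$ and $\#\mathcal{M}_\ell\le C_{\mathrm{mark}}\min\{\#\mathcal{U}:\mathcal{U}\subseteq\mathcal{T}_\ell,\ \theta\eta_\ell(u_\ell^{\underline{k},\underline{i}})^2\le\eta_\ell(\mathcal{U},u_\ell^{\underline{k},\underline{i}})^2\}$. (III) $\mathcal{T}_{\ell+1}:=\mathtt{refine}(\mathcal{T}_\ell,\mathcal{M}_\ell)$ and $u_{\ell+1}^{0,0}:=u_{\ell+1}^{0,\underline{i}}:=u_{\ell+1}^{0,\star}:=u_\ell^{\underline{k},\underline{i}}$. Index set: $\mathcal{Q}:=\{(\ell,k,i)\in\mathbb{N}_0^3: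 u_\ell^{k,i}\text{ is used in the algorithm}\}$; $\underline{k}[\ell]:=\sup\{k\in\mathbb{N}:(\ell,k,0)\in\mathcal{Q}\}$, $\underline{i}[\ell,k]:=\sup\{i\in\mathbb{N}:(\ell,k,i)\in\mathcal{Q}\}$. *)

(* Defs.v *)
From HB Require Import structures.
From mathcomp Require Import all_boot all_order all_algebra.
From mathcomp Require Import all_classical all_reals all_analysis.
Set Implicit Arguments. Unset Strict Implicit. Unset Printing Implicit Defensive.
Import Order.TTheory GRing.Theory Num.Theory.
Import numFieldNormedType.Exports.
Local Open Scope ring_scope.
Local Open Scope classical_set_scope.

Definition hnorm (R : realType) (X : lmodType R) (ip : X -> X -> R) (v : X) : R :=
  Num.sqrt (ip v v).

Definition is_hilbert (R : realType) (X : lmodType R) (ip : X -> X -> R) : Prop :=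
  [/\ (forall u v, ip u v = ip v u),
      (forall a u v w, ip (a *: u + v) w = a * ip u w + ip v w),
      (forall v, v != 0 -> 0 < ip v v) &
      (forall u : nat -> X,
          (forall e : R, 0 < e -> exists N, forall m n, (N <= m)%N -> (N <= n)%N ->
                 hnorm ip (u m - u n) < e) ->
          exists x, forall e : R, 0 < e -> exists N, forall n, (N <= n)%N ->
                 hnorm ip (u n - x) < e)].

Definition is_dual (R : realType) (X : lmodType R) (ip : X -> X -> R) (phi : X -> R) : Prop :=
  (forall a u v, phi (a *: u + v) = a * phi u + phi v) /\
  (exists C : R, forall v, `|phi v| <= C * hnorm ip v).

Definition dual_norm (R : realType) (X : lmodType R) (ip : X -> X -> R) (phi : X -> R) : R :=
  sup [set r | exists v, hnorm ip v <= 1 /\ r = `|phi v|].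

Definition is_fd_subspace (R : realType) (X : lmodType R) (S : set X) : Prop :=
  [/\ S 0,
      (forall a u v, S u -> S v -> S (a *: u + v)) &
      (exists s : seq X, (forall i, (i < size s)%N -> S s`_i) /\
         forall v, S v -> exists c : nat -> R, v = \sum_(i < size s) c i *: s`_i)].

(* ---------- conditions on the operator A (written <A w, v> = Aop w v) ---------- *)

Definition cond_SM (R : realType) (X : lmodType R) (ip : X -> X -> R)
    (Aop : X -> X -> R) (alpha : R) : Prop :=
  0 < alpha /\
  forall v w, alpha * hnorm ip (v - w) ^+ 2 <= Aop v (v - w) - Aop w (v - w).

Definition cond_LIP (R : realType) (X : lmodType R) (ip : X -> X -> R)
    (Aop : X -> X -> R) (L : R -> R) : Prop :=
  forall th : R, 0 < th ->
    0 < L th /\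
    forall v w phi, Num.max (hnorm ip v) (hnorm ip (v - w)) <= th ->
      Aop v phi - Aop w phi <= L th * hnorm ip (v - w) * hnorm ip phi.

Definition cond_POT (R : realType) (X : lmodType R)
    (Aop : X -> X -> R) (P : X -> R) : Prop :=
  forall w v, (fun t : R => (P (w + t *: v) - P w) / t) @ 0^' --> Aop w v.

Definition energy (R : realType) (X : lmodType R) (P F : X -> R) (v : X) : R :=
  P v - F v.

Definition is_alg_solver (R : realType) (X : lmodType R) (ip : X -> X -> R)
    (Xl : set X) (qalg : R) (Psi : (X -> R) -> X -> X) : Prop :=
  0 < qalg /\ qalg < 1 /\
  forall phi, is_dual ip phi ->
  forall wstar, Xl wstar -> (forall v, Xl v -> ip wstar v = phi v) ->
  forall w, Xl w ->
    Xl (Psi phi w) /\ hnorm ip (wstar - Psi phi w) <= qalg * hnorm ip (wstar - w).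

(* functional defining the Zarantonello step Phi_l(delta; w):
   v |-> <<w, v>> + delta [F(v) - <A w, v>] *)
Definition zar_rhs (R : realType) (X : lmodType R) (ip : X -> X -> R)
    (Aop : X -> X -> R) (F : X -> R) (delta : R) (w : X) : X -> R :=
  fun v => ip w v + delta * (F v - Aop w v).

Definition first_stop (Pr : nat -> Prop) (n : nat) : Prop :=
  (1 <= n)%N /\ Pr n /\ forall m, (1 <= m)%N -> (m < n)%N -> ~ Pr m.

(* U k stands for u_l^{k, ibar}, ib k for ibar[l,k];
   the inner iterates are u_l^{k,i} = iter i (Psi phi_k) (U (k-1)),
   with u_l^{k,0} = U (k-1). *)
Definition ailfem_level_run (R : realType) (X : lmodType R) (ip : X -> X -> R)
    (Aop : X -> X -> R) (F : X -> R) (Psi : (X -> R) -> X -> X) (eta : X -> R)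
    (lam_lin lam_alg delta : R) (imin : nat) (u0 : X)
    (U : nat -> X) (ib : nat -> nat) (K : nat) : Prop :=
  U 0%N = u0 /\
  forall j, (1 <= j)%N -> (j <= K)%N ->
    let w := U j.-1 in
    let it := fun i => iter i (Psi (zar_rhs ip Aop F delta w)) w in
    first_stop (fun i => hnorm ip (it i.-1 - it i)
                           <= lam_alg * (lam_lin * eta (it i) + hnorm ip (it i - w))
                         /\ (imin <= i)%N) (ib j)
    /\ U j = it (ib j).

Definition kloop_stop (R : realType) (X : lmodType R) (ip : X -> X -> R)
    (P F : X -> R) (eta : X -> R) (lam_lin M : R) (U : nat -> X) (j : nat) : Prop :=
  energy P F (U j.-1) - energy P F (U j) <= lam_lin ^+ 2 * eta (U j) ^+ 2
  /\ hnorm ip (U j) <= 2 * M.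

Definition qE2 (R : realType) (L : R -> R) (alpha qalg : R) (imin : nat) (tau d : R) : R :=
  1 - (d^-1 - L (5 * tau)) * ((1 - qalg ^+ imin) ^+ 2 * d ^+ 2 * alpha ^+ 2) / L (2 * tau).

(* Main.v *)
Require Import Defs.
From HB Require Import structures.
From mathcomp Require Import all_boot all_order all_algebra.
From mathcomp Require Import all_classical all_reals all_analysis.
From mathcomp Require Import ring lra.
Import Order.TTheory GRing.Theory Num.Theory.
Import numFieldNormedType.Exports.
Local Open Scope ring_scope.
Local Open Scope classical_set_scope.

Section Hil.
Context {R : realType} {X : lmodType R} (ip : X -> X -> R) (Hh : is_hilbert ip).

Lemma ipC u v : ip u v = ip v u.
Proof. by case: Hh. Qed.
Lemma ipL a u v w : ip (a *: u + v) w = a * ip u w + ip v w.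
Proof. by case: Hh. Qed.
Lemma ippos v : v != 0 -> 0 < ip v v.
Proof. by case: Hh => _ _ h _; apply: h. Qed.
Lemma ip0l w : ip 0 w = 0.
Proof. have h := ipL 1 0 0 w; rewrite scaler0 addr0 mul1r in h; lra. Qed.
Lemma ipDl u v w : ip (u + v) w = ip u w + ip v w.
Proof. by have := ipL 1 u v w; rewrite scale1r mul1r. Qed.
Lemma ipZl a u w : ip (a *: u) w = a * ip u w.
Proof. by have := ipL a u 0 w; rewrite addr0 ip0l addr0. Qed.
Lemma ipNl u w : ip (- u) w = - ip u w.
Proof. by rewrite -scaleN1r ipZl mulN1r. Qed.
Lemma ipBl u v w : ip (u - v) w = ip u w - ip v w.
Proof. by rewrite ipDl ipNl. Qed.
Lemma ipDr u v w : ip w (u + v) = ip w u + ip w v.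
Proof. by rewrite ipC ipDl !(ipC w). Qed.
Lemma ipZr a u w : ip w (a *: u) = a * ip w u.
Proof. by rewrite ipC ipZl ipC. Qed.
Lemma ipNr u w : ip w (- u) = - ip w u.
Proof. by rewrite ipC ipNl ipC. Qed.
Lemma ipBr u v w : ip w (u - v) = ip w u - ip w v.
Proof. by rewrite ipDr ipNr. Qed.
Lemma ip0r w : ip w 0 = 0.
Proof. by rewrite ipC ip0l. Qed.
Lemma ip_ge0 v : 0 <= ip v v.
Proof. by case: (eqVneq v 0) => [->|/ippos/ltW//]; rewrite ip0l. Qed.
Lemma ip_eq0 v : ip v v = 0 -> v = 0.
Proof. by case: (eqVneq v 0) => // /ippos /gt_eqF /eqP. Qed.

Lemma hnorm_ge0 v : 0 <= hnorm ip v.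
Proof. exact: sqrtr_ge0. Qed.
Lemma hnorm_sq v : hnorm ip v ^+ 2 = ip v v.
Proof. by rewrite /hnorm sqr_sqrtr // ip_ge0. Qed.
Lemma hnorm0 : hnorm ip 0 = 0.
Proof. by rewrite /hnorm ip0l sqrtr0. Qed.
Lemma hnorm_eq0 v : hnorm ip v = 0 -> v = 0.
Proof. by move=> h; apply: ip_eq0; rewrite -hnorm_sq h expr0n. Qed.
Lemma hnormZ a v : hnorm ip (a *: v) = `|a| * hnorm ip v.
Proof.
rewrite /hnorm ipZl ipZr mulrA -expr2 sqrtrM ?sqr_ge0 //.
by rewrite sqrtr_sqr.
Qed.
Lemma hnormN v : hnorm ip (- v) = hnorm ip v.
Proof. by rewrite -scaleN1r hnormZ normrN1 mul1r. Qed.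
Lemma hnormB u v : hnorm ip (u - v) = hnorm ip (v - u).
Proof. by rewrite -hnormN opprB. Qed.

Lemma CS2 u v : ip u v ^+ 2 <= ip u u * ip v v.
Proof.
have key t : 0 <= t ^+ 2 * ip u u + 2 * t * ip u v + ip v v.
  have := ip_ge0 (t *: u + v).
  rewrite ipDl !ipDr !ipZl !ipZr (ipC v u); nra.
case: (eqVneq u 0) => [->|nu].
  by rewrite !ip0l expr0n /= mul0r.
have Ap := @ippos u nu.
have := key (- ip u v / ip u u).
set A := ip u u; set B := ip u v; set C := ip v v => h.
have hA : A != 0 by rewrite gt_eqF.
have e : (- B / A) ^+ 2 * A + 2 * (- B / A) * B + C = C - B ^+ 2 / A.
  by field.
rewrite e subr_ge0 ler_pdivrMr // in h.
by rewrite mulrC.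
Qed.

Lemma CS u v : `|ip u v| <= hnorm ip u * hnorm ip v.
Proof.
rewrite /hnorm -sqrtrM ?ip_ge0 // -sqrtr_sqr.
by rewrite ler_sqrt ?CS2 // mulr_ge0 // ip_ge0.
Qed.
Lemma CSr u v : ip u v <= hnorm ip u * hnorm ip v.
Proof. exact: le_trans (ler_norm _) (CS u v). Qed.

Lemma hnormD u v : hnorm ip (u + v) <= hnorm ip u + hnorm ip v.
Proof.
rewrite -(ler_pXn2r (n:=2)) ?nnegrE ?addr_ge0 ?hnorm_ge0 //.
rewrite hnorm_sq ipDl !ipDr (ipC v u) sqrrD !hnorm_sq.
have := CSr u v; lra.
Qed.
Lemma hnormDB u v : hnorm ip (u - v) <= hnorm ip u + hnorm ip v.
Proof. by rewrite -(hnormN v); apply: hnormD. Qed.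
End Hil.

Section Span.
Context {R : realType} {X : lmodType R} (ip : X -> X -> R) (Hh : is_hilbert ip).

Fixpoint inspan (s : seq X) (v : X) : Prop :=
  match s with [::] => v = 0 | x :: s' => exists c u, inspan s' u /\ v = c *: x + u end.

Lemma inspan0 s : inspan s 0.
Proof. by elim: s => //= x s IH; exists 0, 0; rewrite scale0r addr0. Qed.

Lemma inspanL s a u v : inspan s u -> inspan s v -> inspan s (a *: u + v).
Proof.
elim: s u v => [|x s IH] u v /=; first by move=> -> ->; rewrite scaler0 addr0.
move=> [c [u' [hu ->]]] [d [v' [hv ->]]].
exists (a * c + d), (a *: u' + v'); split; first exact: IH.
by rewrite scalerDr scalerA scalerDl; rewrite -!addrA; congr (_ + _);
  rewrite addrCA.
Qed.

Definition islin (phi : X -> R) := forall a u v, phi (a *: u + v) = a * phi u + phi v.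

Lemma islin0 phi : islin phi -> phi 0 = 0.
Proof. move=> h; have := h 1 0 0; rewrite scaler0 addr0 mul1r; lra. Qed.

Lemma riesz_span s phi : islin phi ->
  exists w, inspan s w /\ forall v, inspan s v -> ip w v = phi v.
Proof.
elim: s phi => [|x s IH] phi lphi.
  exists 0; split => //= v ->; by rewrite ip0l // islin0.
have [w' [sw' hw']] := IH phi lphi.
have lx : islin (ip x) by move=> a u v; rewrite ipDr // ipZr.
have [p [sp hp]] := IH _ lx.
set y := x - p.
have yorth u : inspan s u -> ip y u = 0.
  by move=> su; rewrite /y ipBl // hp // subrr.
have decomp c u : c *: x + u = c *: y + (c *: p + u).
  by rewrite /y scalerBr -addrA (addrA (- _)) addNr add0r.
case: (eqVneq y 0) => [y0|ny].
  exists w'; split; first by exists 0, w'; rewrite scale0r add0r.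
  move=> v [c [u [su ->]]]; rewrite decomp y0 scaler0 add0r.
  by apply: hw'; apply: inspanL.
have yy := @ippos _ _ ip Hh _ ny.
set beta := (phi y - ip w' y) / ip y y.
exists (beta *: x + (w' - beta *: p)); split.
  exists beta, (w' - beta *: p); split => //.
  by rewrite addrC -scaleNr; apply: inspanL.
move=> v [c [u [su ->]]].
have e1 : beta *: x + (w' - beta *: p) = beta *: y + w'.
  by rewrite /y scalerBr addrA [RHS]addrAC.
have su' : inspan s (c *: p + u) by apply: inspanL.
clearbody y.
rewrite e1 decomp (ipL _ Hh) (ipDr _ Hh) (yorth _ su') (ipZr _ Hh) (ipDr _ Hh) (ipZr _ Hh) (hw' _ su') (lphi c y) addr0.
rewrite /beta; field; rewrite gt_eqF //.
Qed.

Lemma inspan_sum s (c : nat -> R) : inspan s (\sum_(i < size s) c i *: s`_i).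
Proof.
elim: s c => [|x s IH] c /=; first by rewrite big_ord0.
rewrite big_ord_recl /=; exists (c 0%N), (\sum_(i < size s) c i.+1 *: s`_i); split => //.
exact: (IH (fun i => c i.+1)).
Qed.

Lemma inspan_sub (Xl : set X) s : Xl 0 -> (forall a u v, Xl u -> Xl v -> Xl (a *: u + v)) ->
  (forall i, (i < size s)%N -> Xl s`_i) -> forall v, inspan s v -> Xl v.
Proof.
move=> X0 XL; elim: s => [|x s IH] hs v /=; first by move->.
move=> [c [u [su ->]]]; apply: XL; first exact: (hs 0%N).
by apply: IH => // i hi; apply: (hs i.+1).
Qed.

Lemma riesz (Xl : set X) phi : is_fd_subspace Xl -> islin phi ->
  exists w, Xl w /\ forall v, Xl v -> ip w v = phi v.
Proof.
move=> [X0 XL [s [hs hsp]]] lphi.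
have [w [sw hw]] := riesz_span s _ lphi.
exists w; split; first exact: (@inspan_sub Xl s X0 XL hs w sw).
move=> v /hsp [c ->]; apply: hw; exact: inspan_sum.
Qed.
End Span.

Section Pot.
Context {R : realType} {X : lmodType R} (Aop : X -> X -> R) (P : X -> R) (hP : cond_POT Aop P).

Lemma pot_derive (x d : X) (t0 : R) :
  is_derive t0 (1 : R) (fun t : R => P (x + t *: d)) (Aop (x + t0 *: d) d).
Proof.
set w := x + t0 *: d.
have e : (fun h : R => h^-1 *: (((fun t : R => P (x + t *: d)) \o shift t0) (h *: 1) - P (x + t0 *: d)))
   = (fun h : R => (P (w + h *: d) - P w) / h).
  apply/funext => h /=; rewrite [h *: 1]mulr1 scalerDl /w.
  by rewrite [h *: d + _]addrC addrA mulrC.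
have cv := hP w d.
have cv' : (fun h : R => h^-1 *: (((fun t : R => P (x + t *: d)) \o shift t0) (h *: 1) - P (x + t0 *: d))) @ 0^' --> Aop w d by rewrite e.
apply: DeriveDef; first by apply/cvg_ex; exists (Aop w d).
exact: (cvg_lim _ cv').
Qed.

Lemma pot_mvt (x d : X) (a c : R) : exists2 t : R, 0 <= t <= 1 &
  P (x + d) - P x - a - c = Aop (x + t *: d) d - a - 2 * c * t.
Proof.
pose q : {poly R} := a *: 'X + c *: 'X^2.
pose phi := (fun t : R => P (x + t *: d)) - (fun t => q.[t]).
have dq t : q^`().[t] = a + 2 * c * t.
  rewrite /q derivD !derivZ derivX derivXn !hornerE /=; ring.
have der t : is_derive t (1 : R) phi (Aop (x + t *: d) d - q^`().[t]).
  by apply: is_deriveB; [apply: pot_derive|apply: is_derive_poly].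
have cont : {within `[0, 1], continuous phi}.
  apply: derivable_within_continuous => t _; exact: (der t).(ex_derive).
have [t ht e] := MVT_segment ler01 (fun t _ => der t) cont.
exists t; first by move: ht; rewrite in_itv.
move: e; rewrite /phi !fctE /= dq !hornerE /= scale1r scale0r addr0 subr0 mulr1.
rewrite !mulr1 !mulr0; lra.
Qed.
End Pot.

Section Dual.
Context {R : realType} {X : lmodType R} {ip : X -> X -> R} {phi : X -> R} (hd : is_dual ip phi).
Lemma dual0 : phi 0 = 0.
Proof. case: hd => h _; have := h 1 0 0; rewrite scaler0 addr0 mul1r; lra. Qed.
Lemma dualZ a u : phi (a *: u) = a * phi u.
Proof. case: hd => h _; by have := h a u 0; rewrite addr0 dual0 addr0. Qed.
Lemma dualD u v : phi (u + v) = phi u + phi v.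
Proof. case: hd => h _; by have := h 1 u v; rewrite scale1r mul1r. Qed.
Lemma dualN u : phi (- u) = - phi u.
Proof. by rewrite -scaleN1r dualZ mulN1r. Qed.
Lemma dualB u v : phi (u - v) = phi u - phi v.
Proof. by rewrite dualD dualN. Qed.
End Dual.

Section Energy.
Context {R : realType} {X : lmodType R} (ip : X -> X -> R) (Aop : X -> X -> R)
  (F P : X -> R) (alpha : R) (L : R -> R)
  (Hh : is_hilbert ip) (hA : forall w, is_dual ip (Aop w)) (hF : is_dual ip F)
  (hSM : cond_SM ip Aop alpha) (hLIP : cond_LIP ip Aop L) (hP : cond_POT Aop P).

Lemma energy_diff x d : energy P F (x + d) - energy P F x = P (x + d) - P x - F d.
Proof. rewrite /energy (dualD hF); lra. Qed.

Lemma E_lower x d :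
  Aop x d - F d + alpha / 2 * hnorm ip d ^+ 2 <= energy P F (x + d) - energy P F x.
Proof.
rewrite energy_diff.
have [t /andP[t0 t1] e] := pot_mvt _ _ hP x d (Aop x d) (alpha / 2 * hnorm ip d ^+ 2).
suff : 0 <= Aop (x + t *: d) d - Aop x d - 2 * (alpha / 2 * hnorm ip d ^+ 2) * t by lra.
case: (eqVneq t 0) => [->|tn0].
  by rewrite scale0r addr0 mulr0; lra.
have tp : 0 < t by rewrite lt_def tn0 t0.
have := hSM.2 (x + t *: d) x.
rewrite [x + _]addrC addrK (dualZ (hA _)) (dualZ (hA _)) (hnormZ _ Hh) ger0_norm //.
move=> h.
have h2 : alpha * t * hnorm ip d ^+ 2 <= Aop (t *: d + x) d - Aop x d.
  rewrite -(ler_pM2l tp); nra.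
  have -> : 2 * (alpha / 2 * hnorm ip d ^+ 2) * t = alpha * t * hnorm ip d ^+ 2 by field.
  lra.
Qed.

Lemma E_upper x d th : 0 < th ->
  (forall t, 0 <= t <= 1 -> Num.max (hnorm ip (x + t *: d)) (hnorm ip (t *: d)) <= th) ->
  energy P F (x + d) - energy P F x <= Aop x d - F d + L th / 2 * hnorm ip d ^+ 2.
Proof.
move=> thp hb; rewrite energy_diff.
have [t /andP[t0 t1] e] := pot_mvt _ _ hP x d (Aop x d) (L th / 2 * hnorm ip d ^+ 2).
suff : Aop (x + t *: d) d - Aop x d - 2 * (L th / 2 * hnorm ip d ^+ 2) * t <= 0 by lra.
have := (hLIP th thp).2 (x + t *: d) x d.
rewrite [x + _]addrC addrK (hnormZ _ Hh) ger0_norm // [t *: d + x]addrC.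
move=> h; have := hb t (introT andP (conj t0 t1)); rewrite (hnormZ _ Hh) ger0_norm // => /h {}h.
have -> : 2 * (L th / 2 * hnorm ip d ^+ 2) * t = L th * (t * hnorm ip d) * hnorm ip d by rewrite expr2; field.
lra.

Qed.
End Energy.

Lemma qE2_lim (R : realType) (L : R -> R) alpha qalg imin tau :
  Num.sqrt (qE2 L alpha qalg imin tau d) @[d --> 0^'+] --> (1 : R).
Proof.
set K := (1 - qalg ^+ imin) ^+ 2 * alpha ^+ 2 / L (2 * tau).
set L5 := L (5 * tau).
pose p : {poly R} := 1 - K *: ('X - L5 *: 'X^2).
have c1 : (fun d => Num.sqrt p.[d]) @ 0 --> Num.sqrt p.[0].
  apply: continuous_comp; [exact: continuous_horner|exact: sqrt_continuous].
have p0 : p.[0] = 1 by rewrite /p !hornerE /=; ring.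
rewrite p0 sqrtr1 in c1.
apply: cvg_trans (cvg_at_right_filter c1).
apply: near_eq_cvg; near=> d.
have dp : 0 < d by near: d; exact: nbhs_right_gt.
rewrite /qE2 /p !hornerE /= /K /L5.
apply: congr1.
have [->|L2n0] := eqVneq (L (2 * tau)) 0.
  by rewrite invr0 !(mulr0, mul0r).
field; rewrite L2n0 gt_eqF //.
Unshelve. all: by end_near.
Qed.

Lemma dual_norm_bound (R : realType) (X : lmodType R) (ip : X -> X -> R) phi :
  is_hilbert ip -> is_dual ip phi ->
  0 <= dual_norm ip phi /\ forall v, `|phi v| <= dual_norm ip phi * hnorm ip v.
Proof.
move=> Hh hd; have [_ [C hC]] := hd.
set S := [set r | exists v, hnorm ip v <= 1 /\ r = `|phi v|].
have S0 : S 0 by exists 0; rewrite hnorm0 // (dual0 hd) normr0; split.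
have hs : has_sup S.
  split; first by exists 0.
  exists (Num.max C 0) => _ [v [hv ->]].
  apply: le_trans (hC v) _.
  have m1 : C <= Num.max C 0 by rewrite le_max lexx.
  have m2 : 0 <= Num.max C 0 by rewrite le_max lexx orbT.
  have := hnorm_ge0 ip v; nra.
have ub := sup_upper_bound hs.
have dn0 : 0 <= dual_norm ip phi by exact: ub.
split => // v.
case: (eqVneq (hnorm ip v) 0) => [/(hnorm_eq0 _ Hh) ->|nv].
  by rewrite (dual0 hd) normr0 hnorm0 // mulr0.
have np : 0 < hnorm ip v by rewrite lt_def nv hnorm_ge0.
have : S `|phi ((hnorm ip v)^-1 *: v)|.
  exists ((hnorm ip v)^-1 *: v); split => //.
  by rewrite (hnormZ _ Hh) ger0_norm ?invr_ge0 ?hnorm_ge0 // mulVf.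
move=> /ub; rewrite (dualZ hd) normrM ger0_norm ?invr_ge0 ?hnorm_ge0 //.
by rewrite ler_pdivrMl // mulrC.
Qed.

Section RealLemmas.
Context {R : realFieldType}.

Lemma key_ineq (A a B D L q : R) : 0 <= A -> a <= q * A -> B <= q ^+ 2 * A ->
  0 < L -> L < D -> 0 <= q -> q <= 1 ->
  (D - L) * (1 - q) ^+ 2 * A <= (A - a) * D - L / 2 * (A - 2 * a + B).
Proof.
move=> A0 ha hB L0 LD q0 q1.
have h1 : (1 - q) ^+ 2 * A <= A - a.
  have : (1 - q) ^+ 2 * A <= (1 - q) * A by rewrite expr2 -mulrA ler_wpM2l ?ler_piMl; nra.
  lra.
have h2 : (D - L) * ((1 - q) ^+ 2 * A) <= (D - L) * (A - a) by rewrite ler_wpM2l // subr_ge0 ltW.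
have h3 : L / 2 * (A - 2 * a + B) <= L * (A - a) - L / 2 * (1 - q ^+ 2) * A.
  have : L / 2 * B <= L / 2 * (q ^+ 2 * A) by rewrite ler_wpM2l // divr_ge0 // ltW.
  lra.
have h4 : 0 <= L / 2 * (1 - q ^+ 2) * A.
  have qq : q ^+ 2 <= 1 by rewrite expr_le1.
  apply: mulr_ge0 => //; apply: mulr_ge0; [by rewrite divr_ge0 // ltW | lra].
rewrite -mulrA; lra.
Qed.

Lemma gap_ineq (x y al dl : R) : 0 < al -> 0 < dl ->
  x * y / dl - al / 2 * y ^+ 2 <= x ^+ 2 / (2 * al * dl ^+ 2).
Proof.
move=> a0 d0.
have h := sqr_ge0 (x / dl - al * y).
rewrite ler_pdivlMr ?mulr_gt0 ?exprn_gt0 //.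
have e : (x * y / dl - al / 2 * y ^+ 2) * (2 * al * dl ^+ 2)
       = (2 * al * x * y * dl - al ^+ 2 * y ^+ 2 * dl ^+ 2) by field; rewrite gt_eqF.
rewrite e.
have e2 : (x / dl - al * y) ^+ 2 * dl ^+ 2 = x ^+ 2 - 2 * al * x * y * dl + al ^+ 2 * y ^+ 2 * dl ^+ 2 by field; rewrite gt_eqF.
have : 0 <= (x / dl - al * y) ^+ 2 * dl ^+ 2 by rewrite mulr_ge0 // sqr_ge0.
rewrite e2; lra.
Qed.

Lemma sq_le (n K : R) : 0 <= n -> 0 <= K -> n ^+ 2 <= n * K -> n <= K.
Proof.
move=> n0 K0 h; case: (eqVneq n 0) => [->//|nn].
have np : 0 < n by rewrite lt_def nn n0.
by rewrite -(ler_pM2l np) -expr2.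
Qed.

Lemma final_ineq (Del A G D dl L5 L2 al q : R) :
  0 < dl -> D = dl^-1 -> L5 < D -> 0 < al -> al <= L2 -> 0 <= G -> 0 <= q -> q <= 1 ->
  (D - L5) * (1 - q) ^+ 2 * A <= Del -> 2 * al * dl ^+ 2 * G <= A ->
  (D - L5) * ((1 - q) ^+ 2 * dl ^+ 2 * al ^+ 2) / L2 * G <= Del.
Proof.
move=> d0 eD LD a0 aL G0 q0 q1 h1 h2.
have L20 : 0 < L2 by exact: lt_le_trans a0 aL.
have c0 : 0 <= (D - L5) * (1 - q) ^+ 2 by rewrite mulr_ge0 ?sqr_ge0 // subr_ge0 ltW.
apply: le_trans h1.
apply: le_trans (ler_wpM2l c0 h2).
have e : (D - L5) * ((1 - q) ^+ 2 * dl ^+ 2 * al ^+ 2) / L2 * G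
   = (D - L5) * (1 - q) ^+ 2 * (dl ^+ 2 * G * al * (al / L2)) by field; rewrite gt_eqF.
rewrite e; apply: ler_wpM2l => //.
have : al / L2 <= 1 by rewrite ler_pdivrMr // mul1r.
have : 0 <= dl ^+ 2 * G * al by rewrite !mulr_ge0 // ?ltW // sqr_ge0.
nra.
Qed.

Lemma q2_range (dl L5 L2 al q : R) : 0 < dl -> dl < L5^-1 -> 0 < al -> al <= L5 -> al <= L2 ->
  0 < q -> q <= 1 / 3 ->
  let c := (dl^-1 - L5) * ((1 - q) ^+ 2 * dl ^+ 2 * al ^+ 2) / L2 in 0 < c /\ c <= 1.
Proof.
move=> d0 dL a0 aL5 aL2 q0 q1 c.
have L50 : 0 < L5 by exact: lt_le_trans a0 aL5.
have L20 : 0 < L2 by exact: lt_le_trans a0 aL2.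
have dL' : dl * L5 < 1 by rewrite -ltr_pdivlMr // mul1r.
have e : c = (1 - dl * L5) * (dl * L5) * (1 - q) ^+ 2 * (al / L5) * (al / L2).
  by rewrite /c; field; rewrite !gt_eqF.
rewrite e; split.
  rewrite !mulr_gt0 ?divr_gt0 ?subr_gt0 ?exprn_gt0 //.
  all: try lra. all: try by rewrite invr_gt0.
have x1 : (1 - dl * L5) * (dl * L5) <= 1 by nra.
have x0 : 0 <= (1 - dl * L5) * (dl * L5) by rewrite mulr_ge0 // ?subr_ge0 ?ltW // mulr_gt0.
have y1 : (1 - q) ^+ 2 <= 1 by rewrite expr_le1 //; lra.
have y0 : 0 <= (1 - q) ^+ 2 by exact: sqr_ge0.
have z1 : al / L5 <= 1 by rewrite ler_pdivrMr // mul1r.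
have z0 : 0 <= al / L5 by rewrite divr_ge0 // ltW.
have w1 : al / L2 <= 1 by rewrite ler_pdivrMr // mul1r.
have w0 : 0 <= al / L2 by rewrite divr_ge0 // ltW.
have p1 := ler_pM x0 y0 x1 y1; rewrite mul1r in p1.
have p2 := ler_pM (mulr_ge0 x0 y0) z0 p1 z1; rewrite mul1r in p2.
have p3 := ler_pM (mulr_ge0 (mulr_ge0 x0 y0) z0) w0 p2 w1; rewrite mul1r in p3.
exact: p3.
Qed.
End RealLemmas.

Lemma alpha_le_L (R : realType) (X : lmodType R) (ip : X -> X -> R) Aop alpha L (x0 : X) :
  is_hilbert ip -> cond_SM ip Aop alpha -> cond_LIP ip Aop L -> x0 != 0 ->
  forall th, 0 < th -> alpha <= L th.
Proof.
move=> Hh [a0 hSM] hLIP nx0 th thp.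
have n0 : 0 < hnorm ip x0.
  rewrite lt_def hnorm_ge0 andbT; apply/eqP => /(hnorm_eq0 _ Hh); exact/eqP.
set v := (th / hnorm ip x0) *: x0.
have hv : hnorm ip v = th.
  by rewrite /v (hnormZ _ Hh) ger0_norm ?divr_ge0 ?ltW // divfK // gt_eqF.
have h1 := hSM v 0; rewrite subr0 hv in h1.
have := (hLIP th thp).2 v 0 v; rewrite subr0 hv maxxx lexx => /(_ erefl) h2.
have : alpha * th ^+ 2 <= L th * th ^+ 2 by rewrite expr2 mulrA; lra.
by rewrite ler_pM2r // exprn_gt0.
Qed.

Theorem lemma8 (R : realType) (X : lmodType R) (ip : X -> X -> R)
    (Aop : X -> X -> R) (F : X -> R) (P : X -> R) (alpha : R) (L : R -> R)
    (Xl : set X) (qalg : R) (Psi : (X -> R) -> X -> X) (eta : X -> R)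
    (lam_lin lam_alg delta : R) (imin : nat) (u0 ustar : X)
    (U : nat -> X) (ib : nat -> nat) (k : nat) :
  is_hilbert ip ->
  (forall w, is_dual ip (Aop w)) -> is_dual ip F -> Aop 0 <> F ->
  cond_SM ip Aop alpha -> cond_LIP ip Aop L -> cond_POT Aop P ->
  is_fd_subspace Xl ->
  Xl ustar -> (forall v, Xl v -> Aop ustar v = F v) ->
  is_alg_solver ip Xl qalg Psi ->
  (forall v, 0 <= eta v) ->
  0 < lam_lin -> 0 < lam_alg -> (1 <= imin)%N ->
  let M := dual_norm ip (fun v => F v - Aop 0 v) / alpha in
  Xl u0 -> hnorm ip u0 <= 2 * M ->
  ailfem_level_run ip Aop F Psi eta lam_lin lam_alg delta imin u0 U ib k.+1 ->
  (* k < kbar[l]: the k-loop has not terminated at steps 1..k *)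
  (forall j, (1 <= j)%N -> (j <= k)%N -> ~ kloop_stop ip P F eta lam_lin M U j) ->
  let tau := M + 3 * M * Num.sqrt (L (3 * M) / alpha) in
  hnorm ip (U k) <= tau ->
  qalg ^+ imin <= 3^-1 ->
  0 < delta -> delta < (L (5 * tau))^-1 -> delta < 2 * alpha / L (2 * tau) ^+ 2 ->
  let E := energy P F in
  let q2 := qE2 L alpha qalg imin tau delta in
  4 * M <= tau /\
  (0 <= E (U k.+1) - E ustar /\ E (U k.+1) - E ustar <= q2 * (E (U k) - E ustar)) /\
  (0 <= q2 /\ q2 < 1) /\
  (Num.sqrt (qE2 L alpha qalg imin tau d) @[d --> 0^'+] --> (1 : R)) /\
  ((1 - q2) * (E (U k) - E ustar) <= E (U k) - E (U k.+1)
   /\ E (U k) - E (U k.+1) <= E (U k) - E ustar).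
Proof.
move=> Hh hA hF hA0F hSM hLIP hP hXl Xus hus hsolv heta hlin halg himin M
  Xu0 hu0 hrun hnostop tau hUk hq dpos dL5 dL2 E q2.
have [apos _] := hSM.
pose phi0 := fun v => F v - Aop 0 v.
have hphi0 : is_dual ip phi0.
  split.
    by move=> a u v; rewrite /phi0 (proj1 hF) (proj1 (hA 0)); ring.
  have [_ [C1 h1]] := hF; have [_ [C2 h2]] := hA 0.
  exists (C1 + C2) => v; rewrite /phi0.
  apply: le_trans (ler_normB _ _) _; have := h1 v; have := h2 v; lra.
have [dn0 dnb] := dual_norm_bound _ _ _ _ Hh hphi0.
have [x0 hx0] : exists x0, phi0 x0 != 0.
  case: (pselect (exists x0, phi0 x0 != 0)) => // hn.
  exfalso; apply: hA0F; apply/funext => v.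
  have : ~~ (phi0 v != 0) by apply/negP => h; apply: hn; exists v.
  by rewrite negbK /phi0 subr_eq0 => /eqP ->.
have x0n0 : x0 != 0.
  by apply/eqP => e; move: hx0; rewrite e (dual0 hphi0) eqxx.
have dnpos : 0 < dual_norm ip phi0.
  rewrite lt_def dn0 andbT; apply/eqP => e; move: (dnb x0).
  by rewrite e mul0r normr_le0 (negbTE hx0).
have Mpos : 0 < M by rewrite /M divr_gt0.
have aL th : 0 < th -> alpha <= L th := @alpha_le_L _ _ ip Aop alpha L x0 Hh hSM hLIP x0n0 th.
have sq1 : 1 <= Num.sqrt (L (3 * M) / alpha).
  have L3 : alpha <= L (3 * M) by apply: aL; rewrite mulr_gt0.
  rewrite -[X in X <= _]sqrtr1 ler_sqrt; last by rewrite divr_ge0 // ltW // (lt_le_trans apos).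
  by rewrite ler_pdivlMr // mul1r.
have tau4 : 4 * M <= tau.
  have h3 : 3 * M * 1 <= 3 * M * Num.sqrt (L (3 * M) / alpha).
    by rewrite ler_pM2l // mulr_gt0.
  rewrite /tau; lra.
have taupos : 0 < tau by lra.
have Mtau : M <= tau by lra.
set L5 := L (5 * tau); set L2 := L (2 * tau).
have aL5 : alpha <= L5 by apply: aL; lra.
have aL2 : alpha <= L2 by apply: aL; lra.
have L5p : 0 < L5 by lra.
have L2p : 0 < L2 by lra.
have dnM : dual_norm ip phi0 = alpha * M by rewrite /M mulrC divfK // gt_eqF.
have [X0 XL _] := hXl.
have XlB u v : Xl u -> Xl v -> Xl (u - v).
  move=> hu hv; have := XL (-1) v u hv hu; by rewrite scaleN1r addrC.
have [qa0 [qa1 hsolve]] := hsolv.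
have [hFl [C1 hC1]] := hF.
have zdual w : is_dual ip (zar_rhs ip Aop F delta w).
  split.
    move=> a u v; rewrite /zar_rhs (ipDr _ Hh) (ipZr _ Hh) hFl (proj1 (hA w)); ring.
  have [_ [C2 hC2]] := hA w.
  exists (hnorm ip w + `|delta| * (C1 + C2)) => v; rewrite /zar_rhs.
  apply: le_trans (ler_normD _ _) _; rewrite normrM.
  have h1 := CS _ Hh w v.
  have h2 : `|F v - Aop w v| <= (C1 + C2) * hnorm ip v.
    apply: le_trans (ler_normB _ _) _; have := hC1 v; have := hC2 v; lra.
  have h3 := ler_wpM2l (normr_ge0 delta) h2.
  lra.
have iterP w : Xl w -> exists Phi, [/\ Xl Phi,
    (forall v, Xl v -> ip Phi v = zar_rhs ip Aop F delta w v) &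
    forall i, Xl (iter i (Psi (zar_rhs ip Aop F delta w)) w)  /\ hnorm ip (Phi - iter i (Psi (zar_rhs ip Aop F delta w)) w) <= qalg ^+ i * hnorm ip (Phi - w)].
  move=> Xw.
  have [Phi [XPhi hPhi]] := riesz _ Hh Xl _ hXl (proj1 (zdual w)).
  exists Phi; split => // i; elim: i => [|i [IH1 IH2]] /=; first by rewrite expr0 mul1r.
  have [s1 s2] := hsolve _ (zdual w) Phi XPhi hPhi _ IH1.
  split => //; apply: le_trans s2 _; rewrite exprS -mulrA ler_wpM2l //; exact: ltW.
have hU j : (j <= k.+1)%N -> Xl (U j).
  elim: j => [_|j IH hj]; first by rewrite (proj1 hrun).
  have := (proj2 hrun) j.+1 erefl hj; rewrite /= => -[_ ->].
  have [Phi [_ _ it]] := iterP _ (IH (ltnW hj)); exact: (it _).1.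
set w := U k.
have Xw : Xl w := hU k (leqnSn k).
have := (proj2 hrun) k.+1 erefl (leqnn _); rewrite /= => -[fs eU].
have [Phi [XPhi hPhi it]] := iterP w Xw.
have ibge : (imin <= ib k.+1)%N by case: fs => _ [[_ hi] _].
set nxt := U k.+1.
have [Xn hn] : Xl nxt /\ hnorm ip (Phi - nxt) <= qalg ^+ ib k.+1 * hnorm ip (Phi - w).
  by rewrite /nxt eU; exact: it.
set q := qalg ^+ imin.
have qle : qalg ^+ ib k.+1 <= q := ler_wiXn2l (ltW qa0) (ltW qa1) ibge.
have q0 : 0 < q by rewrite exprn_gt0.
have q1 : q <= 1 / 3 by rewrite mul1r.
have q1' : q <= 1 by lra.
set e0 := Phi - w; set e := Phi - nxt; set h := nxt - w.
have he : hnorm ip e <= q * hnorm ip e0.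
  exact: le_trans hn (ler_wpM2r (hnorm_ge0 _ _) qle).
have Xe0 : Xl e0 := XlB _ _ XPhi Xw.
have Xh : Xl h := XlB _ _ Xn Xw.
have key v : Xl v -> ip e0 v = delta * (F v - Aop w v).
  by move=> Xv; rewrite /e0 (ipBl _ Hh) hPhi // /zar_rhs; ring.
have t5 : 0 < 5 * tau by clear -taupos; lra.
have dL5' : delta * L5 < 1 by rewrite -ltr_pdivlMr // mul1r.
have L5D : L5 < delta^-1 by rewrite -[delta^-1]mul1r ltr_pdivlMr // mulrC.
have dal : delta * alpha <= 1.
  have hda : delta * alpha <= delta * L5 by rewrite ler_wpM2l // ltW.
  clear -hda dL5'; lra.
have hw0 := hnorm_ge0 ip w.
have he00 := hnorm_ge0 ip e0.
have e0b : hnorm ip e0 <= 2 * tau.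
  have h1 : hnorm ip e0 ^+ 2 = delta * (F e0 - Aop w e0) by rewrite (hnorm_sq _ Hh) key.
  have h2 : F e0 - Aop 0 e0 <= alpha * M * hnorm ip e0.
    by rewrite -dnM; exact: le_trans (ler_norm _) (dnb e0).
  have h3 : Aop 0 e0 - Aop w e0 <= L5 * hnorm ip w * hnorm ip e0.
    have := (hLIP _ t5).2 w 0 (- e0); rewrite subr0 maxxx (hnormN _ Hh) !(dualN (hA _)).
    move=> H; have hw5 : hnorm ip w <= 5 * tau by clear -hUk taupos; lra.
    by move/H: hw5; rewrite -/L5 opprK addrC.
  have t1 : L5 * hnorm ip w * hnorm ip e0 <= L5 * tau * hnorm ip e0.
    by rewrite ler_wpM2r // ler_wpM2l // ltW.
  have h4 : F e0 - Aop w e0 <= (alpha * M + L5 * tau) * hnorm ip e0.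
    by clear -h2 h3 t1; lra.
  have h5 : hnorm ip e0 ^+ 2 <= hnorm ip e0 * (delta * (alpha * M + L5 * tau)).
    by rewrite h1 mulrCA ler_wpM2l ?(ltW dpos) // mulrC.
  have K0 : 0 <= delta * (alpha * M + L5 * tau).
    apply: mulr_ge0; first exact: ltW.
    by apply: addr_ge0; apply: mulr_ge0; rewrite ltW.
  have h6 := sq_le _ _ he00 K0 h5.
  have i1 : delta * alpha * M <= M by rewrite ler_piMl // ltW.
  have i2 : delta * L5 * tau <= tau by rewrite ler_piMl // ?ltW // mulr_ge0 // ltW.
  have e6 : delta * (alpha * M + L5 * tau) = delta * alpha * M + delta * L5 * tau by ring.
  rewrite e6 in h6; clear -h6 i1 i2 Mtau; lra.
have eh : h = e0 - e by rewrite /h /e0 /e opprB [RHS]addrC addrA subrK.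
have hb : hnorm ip h <= 8 / 3 * tau.
  have h1 := hnormDB _ Hh e0 e; rewrite -eh in h1.
  have h2 : q * hnorm ip e0 <= 1 / 3 * (2 * tau).
    by apply: ler_pM => //; exact: ltW.
  clear -h1 h2 he e0b; lra.
have hh0 := hnorm_ge0 ip h.
have Eup : E nxt - E w <= Aop w h - F h + L5 / 2 * hnorm ip h ^+ 2.
  have := E_upper ip Aop F P L Hh hF hLIP hP w h (5 * tau) t5.
  rewrite (_ : w + h = nxt); last by rewrite /h addrC subrK.
  apply => t /andP[t0 t1]; rewrite ge_max; apply/andP.
  have th : t * hnorm ip h <= hnorm ip h by rewrite ler_piMl.
  split.
    apply: le_trans (hnormD _ Hh _ _) _; rewrite (hnormZ _ Hh) ger0_norm //.
    by clear -th hb hUk taupos; lra.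
  by rewrite (hnormZ _ Hh) ger0_norm //; clear -th hb taupos; lra.
set A := hnorm ip e0 ^+ 2.
have Adef : A = ip e0 e0 by rewrite /A (hnorm_sq _ Hh).
have A0 : 0 <= A by rewrite /A sqr_ge0.
have hee0 := hnorm_ge0 ip e.
have ha : ip e0 e <= q * A.
  apply: le_trans (CSr _ Hh e0 e) _; rewrite /A expr2 mulrCA.
  by rewrite ler_wpM2l.
have hB : ip e e <= q ^+ 2 * A.
  rewrite -(hnorm_sq _ Hh) /A -exprMn expr2 expr2.
  by apply: ler_pM.
have hip : ip e0 h = A - ip e0 e by rewrite eh (ipBr _ Hh e0 e e0) Adef.
have hh2 : hnorm ip h ^+ 2 = A - 2 * ip e0 e + ip e e.
  by rewrite (hnorm_sq _ Hh) eh (ipBl _ Hh e0 e) (ipBr _ Hh e0 e e0) (ipBr _ Hh e0 e e) (ipC _ Hh e e0) Adef; ring.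
have hFh : Aop w h - F h = - ((A - ip e0 e) * delta^-1).
  by rewrite -hip key //; field; rewrite gt_eqF.
have Del : (delta^-1 - L5) * (1 - q) ^+ 2 * A <= E w - E nxt.
  have ki := key_ineq _ _ _ _ _ _ A0 ha hB L5p L5D (ltW q0) q1'.
  rewrite hFh hh2 in Eup; clear -ki Eup; lra.
set G := E w - E ustar.
have G0 : 0 <= G.
  have := E_lower ip Aop F P alpha Hh hA hF hSM hP ustar (w - ustar).
  rewrite [ustar + _]addrC subrK hus; last exact: XlB.
  have hz : 0 <= alpha / 2 * hnorm ip (w - ustar) ^+ 2.
    by rewrite mulr_ge0 ?sqr_ge0 // divr_ge0 // ltW.
  rewrite /G /E subrr add0r => h'; exact: le_trans hz h'.
have Gn0 : 0 <= E nxt - E ustar.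
  have := E_lower ip Aop F P alpha Hh hA hF hSM hP ustar (nxt - ustar).
  rewrite [ustar + _]addrC subrK hus; last exact: XlB.
  have hz : 0 <= alpha / 2 * hnorm ip (nxt - ustar) ^+ 2.
    by rewrite mulr_ge0 ?sqr_ge0 // divr_ge0 // ltW.
  rewrite /E subrr add0r => h'; exact: le_trans hz h'.
have GA : 2 * alpha * delta ^+ 2 * G <= A.
  have := E_lower ip Aop F P alpha Hh hA hF hSM hP w (ustar - w).
  rewrite [w + _]addrC subrK.
  have Xd : Xl (ustar - w) by exact: XlB.
  have ek : Aop w (ustar - w) - F (ustar - w) = - (ip e0 (ustar - w) * delta^-1).
    by rewrite key //; field; rewrite gt_eqF.
  rewrite ek => hl.
  have cs := CSr _ Hh e0 (ustar - w).
  have cs' : ip e0 (ustar - w) * delta^-1 <= hnorm ip e0 * hnorm ip (ustar - w) / delta.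
    by rewrite ler_wpM2r // invr_ge0 ltW.
  have gi := gap_ineq (hnorm ip e0) (hnorm ip (ustar - w)) alpha delta apos dpos.
  have hG : G <= A / (2 * alpha * delta ^+ 2).
    rewrite /G /A; move: hl; rewrite /E => hl; clear -hl cs' gi; lra.
  by move: hG; rewrite ler_pdivlMr ?mulr_gt0 ?exprn_gt0 // mulrC.
have fin := final_ineq _ _ _ _ _ _ _ _ _ dpos erefl L5D apos aL2 G0 (ltW q0) q1' Del GA.
have [c0 c1] := q2_range _ _ _ _ _ dpos dL5 apos aL5 aL2 q0 q1.
set c := (delta^-1 - L5) * ((1 - q) ^+ 2 * delta ^+ 2 * alpha ^+ 2) / L2 in fin c0 c1.
have q2e : q2 = 1 - c by [].
split => //.
split; first split => //.
  rewrite q2e mulrBl mul1r; rewrite /G in fin *; clear -fin; lra.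
split; first by rewrite q2e; clear -c0 c1; lra.
split; first exact: qE2_lim.
rewrite q2e opprB addrC subrK; rewrite /G in fin *; clear -fin Gn0; lra.
Qed.
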